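(* Consider the parabola $y=\frac{a_N}{a_D}x^2+\frac{b_N}{b_D}x+c$, where $\frac{a_N}{a_D}\ne0$ and $\frac{b_N}{b_D}$ are reduced fractions with positive denominators and $c\in\mathbb R$, and let $\bar H=\mathrm{lcm}(a_D,b_D)$. Its horizontal period $H$ equals $\bar H$ or $\bar H/2$; precisely: (i) if $a_D\equiv0\pmod4$, then $H=\mathrm{lcm}(a_D/2,b_D)$; (ii) if $a_D\equiv2\pmod4$ and $b_D\equiv2\pmod4$, then $H=\mathrm{lcm}(a_D/2,b_D/2)$; (iii) in all other cases, $H=\mathrm{lcm}(a_D,b_D)$.
   Context: The horizontal period $H$ of the parabola $y=\alpha x^2+\beta x+c$ (with $\alpha=a_N/a_D$, $\beta=b_N/b_D$) is the smallest positive integer $H$ such that $z=2\alpha H$ and $w=\alpha H^2+\beta H$ are both integers; equivalently, the smallest positive integer $H$ for which there is an affine map of the form $(x,y)\mapsto(x+H,\ zx+y+w)$ mapping both $\mathbb Z^2$ and the parabola onto themselves. *)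

(* Defs.v *)
From HB Require Import structures.
From mathcomp Require Import all_boot all_order all_algebra.
Set Implicit Arguments. Unset Strict Implicit. Unset Printing Implicit Defensive.
Import Order.TTheory GRing.Theory Num.Theory.
Local Open Scope ring_scope.

Definition is_integer (x : rat) : Prop := exists z : int, x = z%:~R.

Definition hperiod_ok (alpha beta : rat) (H : nat) : Prop :=
  (0 < H)%N /\ is_integer (2 * alpha * H%:R) /\
  is_integer (alpha * (H%:R) ^+ 2 + beta * H%:R).

Definition horizontal_period (alpha beta : rat) (H : nat) : Prop :=
  hperiod_ok alpha beta H /\ forall H', hperiod_ok alpha beta H' -> (H <= H')%N.

Definition predicted_period (aD bD : nat) : nat :=
  (if aD %% 4 == 0 then lcmn (aD %/ 2) bD
  else if (aD %% 4 == 2) && (bD %% 4 == 2) then lcmn (aD %/ 2) (bD %/ 2)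
  else lcmn aD bD)%N.

(* Main.v *)
Require Import Defs.
From HB Require Import structures.
From mathcomp Require Import all_boot all_order all_algebra.
From mathcomp Require Import zify ring lra.
Import Order.TTheory GRing.Theory Num.Theory.
Local Open Scope ring_scope.

Lemma isint_int (z : int) : is_integer z%:~R.
Proof. by exists z. Qed.

Lemma isint_nat (n : nat) : is_integer n%:R.
Proof. by exists n%:Z. Qed.

Lemma isint_add x y : is_integer x -> is_integer y -> is_integer (x + y).
Proof. by case=> a -> [b ->]; exists (a + b); rewrite rmorphD. Qed.

Lemma isint_sub x y : is_integer x -> is_integer y -> is_integer (x - y).
Proof. by case=> a -> [b ->]; exists (a - b); rewrite rmorphB. Qed.

Lemma isint_mul x y : is_integer x -> is_integer y -> is_integer (x * y).
Proof. by case=> a -> [b ->]; exists (a * b); rewrite rmorphM. Qed.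

Lemma keyK (a : int) (d x : nat) : (0 < d)%N -> coprime `|a| d ->
  is_integer (a%:~R * x%:R / d%:R) <-> (d %| x)%N.
Proof.
move=> d0 cop; have dn : (d%:R : rat) != 0 by rewrite pnatr_eq0 -lt0n.
split.
- case=> z hz.
  have : (a * x%:Z)%:~R = (z * d%:Z)%:~R :> rat.
    rewrite !rmorphM /= -hz /=. rewrite !pmulrn. field. by [].
  move/intr_inj => e.
  have : (d %| `|a| * x)%N.
    have -> : (absz a * x = absz (a * x%:Z)%R)%N by rewrite abszM.
    by rewrite e abszM dvdn_mull.
  by rewrite Gauss_dvdr // coprime_sym.
- case/dvdnP=> k ->. exists (a * k%:Z).
  rewrite intrM (_ : (k%:Z)%:~R = k%:R :> rat) //. field. by [].
Qed.

Lemma oddE n : (n %% 2 = 1)%N -> odd n.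
Proof. by rewrite modn2; case: odd. Qed.
Lemma oddI n : odd n -> (n %% 2 = 1)%N.
Proof. by rewrite modn2 => ->. Qed.
Lemma evenI n : ~~ odd n -> (n %% 2 = 0)%N.
Proof. by rewrite modn2 => /negbTE ->. Qed.

Arguments keyK {a d x}.

Section Main.
Variables (aN : int) (aD : nat) (bN : int) (bD : nat).
Hypotheses (aD0 : (0 < aD)%N) (copa : coprime `|aN| aD)
  (bD0 : (0 < bD)%N) (copb : coprime `|bN| bD).
Let alpha : rat := aN%:~R / aD%:R.
Let beta : rat := bN%:~R / bD%:R.
Let ok H := hperiod_ok alpha beta H.

Let aDn : (aD%:R : rat) != 0. Proof. by rewrite pnatr_eq0 -lt0n. Qed.
Let bDn : (bD%:R : rat) != 0. Proof. by rewrite pnatr_eq0 -lt0n. Qed.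

Let e1 H : 2 * alpha * H%:R = aN%:~R * (2 * H)%N%:R / aD%:R.
Proof. rewrite /alpha natrM. field. exact: aDn. Qed.
Let eu H : alpha * H%:R ^+ 2 = aN%:~R * (H * H)%N%:R / aD%:R.
Proof. rewrite /alpha natrM. field. exact: aDn. Qed.
Let ev H : beta * H%:R = bN%:~R * H%:R / bD%:R.
Proof. rewrite /beta. field. exact: bDn. Qed.
Let e2v H : bN%:~R * (2 * H)%N%:R / bD%:R =
  2%:R * (alpha * H%:R ^+ 2 + beta * H%:R) - (2 * alpha * H%:R) * H%:R.
Proof. rewrite /alpha /beta natrM. field. by rewrite aDn bDn. Qed.

Lemma V1 H : ok H -> (aD %| 2 * H)%N /\ (bD %| 2 * H)%N.
Proof.
case=> H0 [h1 h2]; split.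
  by apply/(@keyK aN aD (2 * H)%N aD0 copa); rewrite -e1.
apply/(@keyK bN bD (2 * H)%N bD0 copb); rewrite e2v.
by apply: isint_sub; [apply: isint_mul => //; apply: isint_nat|
   apply: isint_mul => //; apply: isint_nat].
Qed.

Lemma uvok H : (0 < H)%N -> (aD %| 2 * H)%N -> (aD %| H * H)%N -> (bD %| H)%N -> ok H.
Proof.
move=> H0 h1 h2 h3; split=> //; split.
  by rewrite e1; apply/(keyK aD0 copa).
rewrite eu ev; apply: isint_add.
  by apply/(keyK aD0 copa).
by apply/(keyK bD0 copb).
Qed.

Lemma ok_u H : ok H -> (aD %| H * H)%N -> (bD %| H)%N.
Proof.
case=> H0 [h1 h2] hu; apply/(keyK bD0 copb); rewrite -ev.
have -> : beta * H%:R = (alpha * H%:R ^+ 2 + beta * H%:R) - alpha * H%:R ^+ 2 by ring.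
apply: isint_sub => //; rewrite eu; exact/(keyK aD0 copa).
Qed.

Lemma ok_v H : ok H -> (bD %| H)%N -> (aD %| H * H)%N.
Proof.
case=> H0 [h1 h2] hv; apply/(keyK aD0 copa); rewrite -eu.
have -> : alpha * H%:R ^+ 2 = (alpha * H%:R ^+ 2 + beta * H%:R) - beta * H%:R by ring.
apply: isint_sub => //; rewrite ev; exact/(keyK bD0 copb).
Qed.

Lemma odd_num (a : int) (d : nat) : coprime `|a| d -> (2 %| d)%N ->
  exists p : int, a = 2 * p + 1.
Proof.
move=> cop d2.
have : ~~ (2 %| gcdn `|a| d)%N by rewrite (eqP cop).
rewrite dvdn_gcd d2 andbT dvdn2 negbK => oa.
have : (`|a| %% 2 = 1)%N by rewrite modn2 oa.
move=> h; exists (a %/ 2)%Z; lia.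
Qed.

Lemma par_ok H m n s t : aD = (2 * m)%N -> bD = (2 * n)%N -> H = (m * s)%N ->
  H = (n * t)%N -> odd (s * H) -> odd t -> ok H.
Proof.
move=> haD hbD hH hH' osH ot.
have H0 : (0 < H)%N by move: osH; rewrite oddM => /andP[_]; case: H {hH hH'}.
have m0 : (m%:R : rat) != 0 by rewrite pnatr_eq0; move: aD0; rewrite haD; case: m {hH haD}.
have n0 : (n%:R : rat) != 0 by rewrite pnatr_eq0; move: bD0; rewrite hbD; case: n {hH' hbD}.
split=> //; split.
  rewrite e1; apply/(keyK aD0 copa); by rewrite haD hH mulnA dvdn_mulr.
have d2a : (2 %| aD)%N by rewrite haD dvdn_mulr.
have [p hp] := odd_num aN aD copa d2a.
have d2b : (2 %| bD)%N by rewrite hbD dvdn_mulr.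
have [r hr] := odd_num bN bD copb d2b.
have E1 : alpha * H%:R ^+ 2 = aN%:~R * (s * H)%N%:R / 2.
  have -> : (H%:R ^+ 2 : rat) = m%:R * (s * H)%N%:R.
    by rewrite expr2 {1}hH !natrM mulrA.
  rewrite /alpha haD natrM. field. by rewrite m0.
have E2 : beta * H%:R = bN%:~R * t%:R / 2.
  rewrite /beta hbD hH' !natrM. field. by rewrite n0.
have hq : ((s * H)%N%:R : rat) = 2 * ((s * H)./2)%N%:R + 1.
  by rewrite -{1}(odd_double_half (s * H)) osH natrD -muln2 natrM addrC mulrC.
have hy : (t%:R : rat) = 2 * (t./2)%N%:R + 1.
  by rewrite -{1}(odd_double_half t) ot natrD -muln2 natrM addrC mulrC.
set q := ((s * H)./2)%N in hq; set y := (t./2)%N in hy.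
rewrite E1 E2 hq hy hp hr.
exists (2 * p * q%:Z + p + q%:Z + 2 * r * y%:Z + r + y%:Z + 1).
rewrite !rmorphD !rmorphM /= !(_ : forall k : nat, (k%:Z)%:~R = k%:R :> rat) //.
by field.
Qed.

Lemma dvd_sq m H : aD = (2 * m)%N -> (2 %| m)%N -> (m %| H)%N -> (aD %| H * H)%N.
Proof.
move=> haD m2 mH; rewrite haD dvdn_mul //; exact: dvdn_trans m2 mH.
Qed.

Arguments V1 {H}. Arguments ok_u {H}. Arguments ok_v {H}. Arguments dvd_sq {m H}. Arguments uvok {H}.

Lemma charP H : ok H <-> (0 < H)%N /\ (predicted_period aD bD %| H)%N.
Proof.
rewrite /predicted_period.
case: ifP => h4.
  set m := (aD %/ 2)%N.
  have haD : aD = (2 * m)%N by move/eqP: h4; rewrite /m; lia.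
  have m2 : (2 %| m)%N by move/eqP: h4; rewrite /m; lia.
  have eA : (aD %| 2 * H)%N = (m %| H)%N by rewrite haD dvdn_pmul2l.
  split.
    move=> okH; have [a2 _] := V1 okH.
    have mH : (m %| H)%N by rewrite -eA.
    split; first by case: okH.
    by rewrite dvdn_lcm mH (ok_u okH (dvd_sq haD m2 mH)).
  case=> H0; rewrite dvdn_lcm => /andP[mH bH].
  by apply: uvok => //; [rewrite eA | exact: dvd_sq haD m2 mH].
case: ifP => h2.
  set m := (aD %/ 2)%N; set n := (bD %/ 2)%N.
  have [/eqP ha /eqP hb] := andP h2.
  have haD : aD = (2 * m)%N by rewrite /m; lia.
  have hbD : bD = (2 * n)%N by rewrite /n; lia.
  have om : odd m by apply: oddE; rewrite /m; lia.
  have eA : (aD %| 2 * H)%N = (m %| H)%N by rewrite haD dvdn_pmul2l.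
  have eB : (bD %| 2 * H)%N = (n %| H)%N by rewrite hbD dvdn_pmul2l.
  split.
    move=> okH; have [a2 b2] := V1 okH.
    split; first by case: okH.
    by rewrite dvdn_lcm -eA -eB a2 b2.
  case=> H0; rewrite dvdn_lcm => /andP[mH nH].
  have on : odd n by apply: oddE; rewrite /n; lia.
  case oH: (odd H).
    have [s hs] := dvdnP mH; have [t ht] := dvdnP nH.
    apply: (@par_ok H m n s t) => //.
    - by rewrite mulnC.
    - by rewrite mulnC.
    - by rewrite oddM oH andbT; move: oH; rewrite hs oddM => /andP[].
    - by move: oH; rewrite ht oddM => /andP[].
  have H2 : (2 %| H)%N by rewrite dvdn2 oH.
  have aH : (aD %| H)%N by rewrite haD Gauss_dvd ?coprime2n // H2.
  have bH : (bD %| H)%N by rewrite hbD Gauss_dvd ?coprime2n // H2.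
  by apply: uvok => //; [exact: dvdn_mull | exact: dvdn_mulr].
split; last first.
  case=> H0; rewrite dvdn_lcm => /andP[aH bH].
  by apply: uvok => //; [exact: dvdn_mull | exact: dvdn_mulr].
move=> okH; have [a2 b2] := V1 okH.
have H0 : (0 < H)%N by case: okH.
suff aH : (aD %| H)%N by rewrite dvdn_lcm aH (ok_u okH (dvdn_mulr _ aH)).
case oa: (odd aD).
  by rewrite -(Gauss_dvdr _ (_ : coprime aD 2)) // coprimen2 oa.
set m := (aD %/ 2)%N.
have ha : (aD %% 4 = 2)%N by move/negbT: h4; move/negbT: oa => /evenI; lia.
have hb : (bD %% 4 != 2)%N by move: h2; rewrite ha eqxx /= => ->.
have haD : aD = (2 * m)%N by rewrite /m; lia.
have om : odd m by apply: oddE; rewrite /m; lia.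
have mH : (m %| H)%N by move: a2; rewrite haD dvdn_pmul2l.
case oH: (odd H); last first.
  by rewrite haD Gauss_dvd ?coprime2n // dvdn2 oH mH.
exfalso.
have bH : (bD %| H)%N.
  case ob: (odd bD).
    by rewrite -(Gauss_dvdr _ (_ : coprime bD 2)) // coprimen2 ob.
  set n := (bD %/ 2)%N.
  have hbD : bD = (2 * n)%N by move/negbT: ob => /evenI; rewrite /n; lia.
  have nH : (n %| H)%N by move: b2; rewrite hbD dvdn_pmul2l.
  have on : odd n by move/dvdnP: nH oH => [k ->]; rewrite oddM => /andP[].
  by move/negP: hb; case; apply/eqP; move/oddI: on; rewrite /n; lia.
have := ok_v okH bH; rewrite haD => /(dvdn_trans (dvdn_mulr _ (dvdnn 2))).
by rewrite dvdn2 oddM oH.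
Qed.

End Main.

Theorem proposition5 (aN : int) (aD : nat) (bN : int) (bD : nat) :
  aN != 0 -> (0 < aD)%N -> coprime `|aN|%N aD ->
  (0 < bD)%N -> coprime `|bN|%N bD ->
  let alpha : rat := aN%:~R / aD%:R in
  let beta : rat := bN%:~R / bD%:R in
  horizontal_period alpha beta (predicted_period aD bD) /\
  (predicted_period aD bD = lcmn aD bD \/
   (predicted_period aD bD).*2 = lcmn aD bD)%N.
Proof.
move=> _ aD0 copa bD0 copb alpha beta.
have cP := @charP aN aD bN bD aD0 copa bD0 copb.
set P := predicted_period aD bD in cP *.
set L := lcmn aD bD.
have L0 : (0 < L)%N by rewrite lcmn_gt0 aD0.
have okL : hperiod_ok alpha beta L.
  apply: (@uvok aN aD bN bD aD0 copa bD0 copb L) => //.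
  - by rewrite dvdn_mull // dvdn_lcml.
  - by rewrite dvdn_mulr // dvdn_lcml.
  - by rewrite dvdn_lcmr.
have [_ PL] := (cP L).1 okL.
have P0 : (0 < P)%N by move: PL L0; case: (P) => //; rewrite dvd0n => /eqP ->.
have okP : hperiod_ok alpha beta P by apply/cP; rewrite dvdnn.
split.
  by split=> // H' /cP [H0 PH]; apply: dvdn_leq.
have [a2 b2] := @V1 aN aD bN bD aD0 copa bD0 copb P okP.
have L2P : (L %| 2 * P)%N by rewrite dvdn_lcm a2 b2.
have [k hk] := dvdnP PL.
have : (k %| 2)%N by move: L2P; rewrite hk dvdn_pmul2r.
case: k hk => [|[|[|k]]] hk //.
- by move=> _; left; rewrite hk mul1n.
- by move=> _; right; rewrite hk -muln2 mulnC.
Qed.
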